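(* Let $\mathbb F$ be a field that is not the field with two elements. The problem of classifying, up to isomorphism of Lie algebras, the Lie algebras $\mathrm L(V)$, where $V\subset\mathbb F^{n\times n}$ ($n=1,2,\dots$) is a two-dimensional vector space of pairwise commuting matrices, is wild.
   Context: For a vector space $V\subset\mathbb F^{n\times n}$ of commuting matrices, $\widetilde V$ denotes the space of all $(n+1)\times(n+1)$ matrices $\begin{bmatrix}A&a\\0&0\end{bmatrix}$ with $A\in V$, $a\in\mathbb F^n$; $\mathrm L(V)$ is $\widetilde V$ with Lie bracket $[u,v]=uv-vu$. A classification problem (a set $\mathcal M_1$ of objects given by tuples of matrices, with an equivalence given by admissible transformations $\mathcal M_2$) is wild if there is a tuple $M(x,y)=(M_1(x,y),\dots,M_t(x,y))$ of matrices whose entries are noncommutative polynomials in $x,y$ over $\mathbb F$ such that (i) $M(A,B)$ gives an object of the problem for all $A,B\in\mathbb F^{n\times n}$, $n\ge1$ (scalars $\alpha$ replaced by $\alpha I_n$), and (ii) $M(A,B)$ and $M(A',B')$ give equivalent objects iff $(A,B)$ and $(A',B')$ are similar, i.e. $(S^{-1}AS,S^{-1}BS)=(A',B')$ for some nonsingular $S$. *)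

(* Defs.v *)
From HB Require Import structures.
From mathcomp Require Import all_boot all_order all_algebra.
Set Implicit Arguments. Unset Strict Implicit. Unset Printing Implicit Defensive.
Import GRing.Theory.
Local Open Scope ring_scope.

Inductive ncpoly (F : Type) : Type :=
  | NCc of F
  | NCx
  | NCy
  | NCadd of ncpoly F & ncpoly F
  | NCmul of ncpoly F & ncpoly F.
Arguments NCx {F}. Arguments NCy {F}.

Fixpoint nceval (F : fieldType) (n : nat) (A B : 'M[F]_n) (p : ncpoly F)
  : 'M[F]_n :=
  match p with
  | NCc c => c%:M
  | NCx => A
  | NCy => B
  | NCadd p q => nceval A B p + nceval A B q
  | NCmul p q => nceval A B p *m nceval A B q
  end.

(* A k x k matrix of noncommutative polynomials (entries indexed by nat,
   only indices < k matter), evaluated at (A,B) with A,B of size n.+1: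
   the resulting block matrix has size k * n.+1, block (i,j) = M i j (A,B). *)
Definition ncmx_eval (F : fieldType) (k n : nat)
  (M : nat -> nat -> ncpoly F) (A B : 'M[F]_n.+1) : 'M[F]_(k * n.+1) :=
  \matrix_(r, c) (nceval A B (M (r %/ n.+1)%N (c %/ n.+1)%N))
                   (inord (r %% n.+1)) (inord (c %% n.+1)).

(* Membership in L(V) for V = span(P, Q):
   matrices [A a; 0 0] with A in V, a in F^N. *)
Definition inL (F : fieldType) (N : nat) (P Q : 'M[F]_N)
  (X : 'M[F]_(N + 1)) : Prop :=
  exists (a b : F) (v : 'cV[F]_N),
    X = block_mx (a *: P + b *: Q) v (0 : 'M[F]_(1, N)) (0 : 'M[F]_(1, 1)).

Definition lie (F : fieldType) (m : nat) (X Y : 'M[F]_m) : 'M[F]_m :=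
  X *m Y - Y *m X.

Definition LieIso (F : fieldType) (N N' : nat)
  (P Q : 'M[F]_N) (P' Q' : 'M[F]_N') : Prop :=
  exists f : 'M[F]_(N + 1) -> 'M[F]_(N' + 1),
    [/\ (forall X, inL P Q X -> inL P' Q' (f X)),
        (forall (c : F) X Y, inL P Q X -> inL P Q Y ->
            f (c *: X + Y) = c *: f X + f Y),
        (forall X Y, inL P Q X -> inL P Q Y ->
            f (lie X Y) = lie (f X) (f Y)),
        (forall X Y, inL P Q X -> inL P Q Y -> f X = f Y -> X = Y)
      & (forall Z, inL P' Q' Z -> exists2 X, inL P Q X & f X = Z)].

(* An object of the problem: a basis (P, Q) of a two-dimensional space V
   of pairwise commuting matrices. *)
Definition comm2_obj (F : fieldType) (N : nat) (P Q : 'M[F]_N) : Prop :=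
  P *m Q = Q *m P /\
  (forall a b : F, a *: P + b *: Q = 0 -> a = 0 /\ b = 0).

Definition similar_pair (F : fieldType) (n : nat) (A B A' B' : 'M[F]_n) : Prop :=
  exists2 S : 'M[F]_n, S \in unitmx &
    invmx S *m A *m S = A' /\ invmx S *m B *m S = B'.

Definition comm2_Lie_wild (F : fieldType) : Prop :=
  exists (k : nat) (M1 M2 : nat -> nat -> ncpoly F),
    (forall n (A B : 'M[F]_n.+1),
        comm2_obj (ncmx_eval k M1 A B) (ncmx_eval k M2 A B)) /\
    (forall n (A B A' B' : 'M[F]_n.+1),
        LieIso (ncmx_eval k M1 A B) (ncmx_eval k M2 A B)
               (ncmx_eval k M1 A' B') (ncmx_eval k M2 A' B')
        <-> similar_pair A B A' B').

(* Main.v *)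
Require Import Defs.
From HB Require Import structures.
From mathcomp Require Import all_boot all_order all_algebra.
From mathcomp Require Import zify.
Set Implicit Arguments. Unset Strict Implicit. Unset Printing Implicit Defensive.
Import GRing.Theory.
Local Open Scope ring_scope.

Section Blocks.
Variable F : fieldType.
Variables k n : nat.
Local Notation m := n.+1.
Local Notation N := (k * n.+1)%N.

Lemma bidx_lt (i : 'I_k) (r : 'I_m) : (i * m + r < N)%N.
Proof. have := ltn_ord i; have := ltn_ord r; nia. Qed.

Definition bidx (i : 'I_k) (r : 'I_m) : 'I_N := Ordinal (bidx_lt i r).

Lemma divord_lt (a : 'I_N) : (a %/ m < k)%N.
Proof. by rewrite ltn_divLR. Qed.
Definition divord (a : 'I_N) : 'I_k := Ordinal (divord_lt a).
Lemma modord_lt (a : 'I_N) : (a %% m < m)%N.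
Proof. by rewrite ltn_pmod. Qed.
Definition modord (a : 'I_N) : 'I_m := Ordinal (modord_lt a).

Lemma bidxK a : bidx (divord a) (modord a) = a.
Proof. by apply: val_inj => /=; rewrite -divn_eq. Qed.

Lemma divord_bidx i r : divord (bidx i r) = i.
Proof. by apply: val_inj => /=; rewrite divnMDl // divn_small // addn0. Qed.
Lemma modord_bidx i r : modord (bidx i r) = r.
Proof. by apply: val_inj => /=; rewrite modnMDl modn_small. Qed.

Lemma bidx_eq i r j c : (bidx i r == bidx j c) = (i == j) && (r == c).
Proof.
apply/eqP/andP => [e|[/eqP -> /eqP ->]] //.
by split; apply/eqP; [rewrite -(divord_bidx i r) e divord_bidx | rewrite -(modord_bidx i r) e modord_bidx].
Qed.

Definition blkof (X : 'M[F]_N) (i j : 'I_k) : 'M[F]_m :=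
  \matrix_(r, c) X (bidx i r) (bidx j c).

Definition blk (G : 'I_k -> 'I_k -> 'M[F]_m) : 'M[F]_N :=
  \matrix_(a, b) G (divord a) (divord b) (modord a) (modord b).

Lemma blkofK G i j : blkof (blk G) i j = G i j.
Proof. by apply/matrixP => r c; rewrite !mxE !divord_bidx !modord_bidx. Qed.

Lemma blk_inj (X Y : 'M[F]_N) : (forall i j, blkof X i j = blkof Y i j) -> X = Y.
Proof.
move=> H; apply/matrixP => a b; rewrite -(bidxK a) -(bidxK b).
by move/(_ (divord a) (divord b))/matrixP/(_ (modord a) (modord b)): H; rewrite !mxE.
Qed.

Lemma sum_bidx (G : 'I_N -> F) :
  \sum_(a < N) G a = \sum_(l < k) \sum_(r < m) G (bidx l r).
Proof.
rewrite pair_bigA /= (reindex (fun p : 'I_k * 'I_m => bidx p.1 p.2)) //.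
exists (fun a => (divord a, modord a)) => [[i r] _|a _] /=.
  by rewrite divord_bidx modord_bidx.
by rewrite bidxK.
Qed.

Lemma blkofM (X Y : 'M[F]_N) i j :
  blkof (X *m Y) i j = \sum_(l < k) blkof X i l *m blkof Y l j.
Proof.
apply/matrixP => r c; rewrite !mxE summxE sum_bidx; apply: eq_bigr => l _.
by rewrite mxE; apply: eq_bigr => t _; rewrite !mxE.
Qed.

Lemma blkofD (X Y : 'M[F]_N) i j : blkof (X + Y) i j = blkof X i j + blkof Y i j.
Proof. by apply/matrixP => r c; rewrite !mxE. Qed.
Lemma blkofZ a (X : 'M[F]_N) i j : blkof (a *: X) i j = a *: blkof X i j.
Proof. by apply/matrixP => r c; rewrite !mxE. Qed.
Lemma blkof0 i j : blkof 0 i j = 0.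
Proof. by apply/matrixP => r c; rewrite !mxE. Qed.
Lemma blkofN (X : 'M[F]_N) i j : blkof (- X) i j = - blkof X i j.
Proof. by apply/matrixP => r c; rewrite !mxE. Qed.

Lemma blkof1 i j : blkof 1%:M i j = if i == j then 1%:M else 0.
Proof.
apply/matrixP => r c; rewrite !mxE bidx_eq.
by case: (i =P j) => _ /=; rewrite ?mxE.
Qed.

Lemma blkof_ncmx (M : nat -> nat -> ncpoly F) (A B : 'M[F]_m) i j :
  blkof (ncmx_eval k M A B) i j = nceval A B (M i j).
Proof.
apply/matrixP => r c; rewrite !mxE /=.
rewrite !divnMDl // !divn_small // !addn0.
rewrite !modnMDl !modn_small //.
by rewrite !inord_val.
Qed.

End Blocks.

Section Concrete.
Variable F : fieldType.

Definition c0 : ncpoly F := NCc 0.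
Definition c1 : ncpoly F := NCc 1.

Definition M1 (i j : nat) : ncpoly F :=
  match i, j with
  | 1, 0 => c1 | 3, 1 => c1 | 3, 2 => NCx | 4, 4 => c1 | 6, 5 => c1
  | _, _ => c0 end.
Definition M2 (i j : nat) : ncpoly F :=
  match i, j with
  | 2, 0 => c1 | 3, 1 => NCx | 3, 2 => NCy | 5, 5 => c1 | 6, 6 => c1
  | _, _ => c0 end.
Definition MP2 (i j : nat) : ncpoly F :=
  match i, j with | 3, 0 => c1 | 4, 4 => c1 | _, _ => c0 end.
Definition MP3 (i j : nat) : ncpoly F :=
  match i, j with | 4, 4 => c1 | _, _ => c0 end.
Definition MQ2 (i j : nat) : ncpoly F :=
  match i, j with | 3, 0 => NCy | 5, 5 => c1 | 6, 6 => c1 | _, _ => c0 end.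
Definition MQ3 (i j : nat) : ncpoly F :=
  match i, j with | 5, 5 => c1 | 6, 6 => c1 | _, _ => c0 end.
Definition MPQ (i j : nat) : ncpoly F :=
  match i, j with | 3, 0 => NCx | 6, 5 => c1 | _, _ => c0 end.
Definition M65 (i j : nat) : ncpoly F :=
  match i, j with | 6, 5 => c1 | _, _ => c0 end.
Definition M66 (i j : nat) : ncpoly F :=
  match i, j with | 6, 6 => c1 | _, _ => c0 end.
Definition MZ (i j : nat) : ncpoly F := c0.

Variable n : nat.
Variables A B : 'M[F]_n.+1.
Local Notation E M := (ncmx_eval 7 M A B).

Lemma sc0 : (0 : F)%:M = 0 :> 'M[F]_n.+1.
Proof. by apply/matrixP => i j; rewrite !mxE mul0rn. Qed.

Ltac blkcomp :=
  apply: blk_inj;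
  case => [[|[|[|[|[|[|[|?]]]]]]] ?]; last by [];
  (case => [[|[|[|[|[|[|[|?]]]]]]] ?]; last by []);
  rewrite blkofM !big_ord_recr big_ord0 !blkof_ncmx /=;
  rewrite ?sc0 ?mul0mx ?mulmx0 ?mul1mx ?mulmx1 ?add0r ?addr0 //.

Lemma eqPP : E M1 *m E M1 = E MP2. Proof. blkcomp. Qed.
Lemma eqP3 : E MP2 *m E M1 = E MP3. Proof. blkcomp. Qed.
Lemma eqP4 : E MP3 *m E M1 = E MP3. Proof. blkcomp. Qed.
Lemma eqQQ : E M2 *m E M2 = E MQ2. Proof. blkcomp. Qed.
Lemma eqQ3 : E MQ2 *m E M2 = E MQ3. Proof. blkcomp. Qed.
Lemma eqQ4 : E MQ3 *m E M2 = E MQ3. Proof. blkcomp. Qed.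
Lemma eqPQ : E M1 *m E M2 = E MPQ. Proof. blkcomp. Qed.
Lemma eqQP : E M2 *m E M1 = E MPQ. Proof. blkcomp. Qed.
Lemma eqP3Q : E MP3 *m E M2 = E MZ. Proof. blkcomp. Qed.
Lemma eqQ3P : E MQ3 *m E M1 = E M65. Proof. blkcomp. Qed.
Lemma eqPEb : E M1 *m E MP3 = E MP3. Proof. blkcomp. Qed.
Lemma eqQEb : E M2 *m E MP3 = E MZ. Proof. blkcomp. Qed.
Lemma eqPE6 : E M1 *m E M66 = E MZ. Proof. blkcomp. Qed.
Lemma eqQE6 : E M2 *m E M66 = E M66. Proof. blkcomp. Qed.

End Concrete.

Section Lie.
Variable F : fieldType.
Variable N : nat.
Implicit Types (V : 'M[F]_N) (v w u : 'cV[F]_N).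

Definition Lb V v : 'M[F]_(N + 1) := block_mx V v (0 : 'M_(1, N)) (0 : 'M_(1, 1)).

Lemma lieLb V1 v1 V2 v2 :
  lie (Lb V1 v1) (Lb V2 v2) = Lb (V1 *m V2 - V2 *m V1) (V1 *m v2 - V2 *m v1).
Proof.
rewrite /lie /Lb !mulmx_block !mulmx0 !mul0mx !addr0 opp_block_mx add_block_mx.
by rewrite !oppr0 !addr0.
Qed.

Lemma lie_Lb0 V v u : lie (Lb V v) (Lb 0 u) = Lb 0 (V *m u).
Proof. by rewrite lieLb !mulmx0 !mul0mx !subr0. Qed.

Lemma Lb_ur V v : ursubmx (Lb V v) = v.
Proof. exact: block_mxKur. Qed.

Lemma LbZD c V v V' v' : c *: Lb V v + Lb V' v' = Lb (c *: V + V') (c *: v + v').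
Proof. by rewrite /Lb scale_block_mx add_block_mx !scaler0 !addr0. Qed.

Lemma Lb00 : Lb 0 0 = 0.
Proof. exact: block_mx0. Qed.

Lemma vec_ext (X : 'M[F]_N) : (forall e : 'cV[F]_N, X *m e = 0) -> X = 0.
Proof.
move=> H; apply/matrixP => i j; have := H (delta_mx j 0).
by rewrite -colE => /matrixP /(_ i 0); rewrite !mxE.
Qed.

Lemma vec_ext2 (X Y : 'M[F]_N) : (forall e : 'cV[F]_N, X *m e = Y *m e) -> X = Y.
Proof.
move=> H; apply/eqP; rewrite -subr_eq0; apply/eqP/vec_ext => e.
by rewrite mulmxBl H subrr.
Qed.

Section Fixed.
Variables P Q : 'M[F]_N.

Lemma inL_Lb a b v : inL P Q (Lb (a *: P + b *: Q) v).
Proof. by exists a, b, v. Qed.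

Lemma inL_0w w : inL P Q (Lb 0 w).
Proof. by exists 0, 0, w; rewrite !scale0r addr0. Qed.

Lemma inL_P : inL P Q (Lb P 0).
Proof. by exists 1, 0, 0; rewrite scale1r scale0r addr0. Qed.
Lemma inL_Q : inL P Q (Lb Q 0).
Proof. by exists 0, 1, 0; rewrite scale1r scale0r add0r. Qed.

Lemma inL0 : inL P Q 0.
Proof. by rewrite -Lb00; apply: inL_0w. Qed.

Hypothesis hPQ : P *m Q = Q *m P.

Lemma comm_span a b c d :
  (a *: P + b *: Q) *m (c *: P + d *: Q) = (c *: P + d *: Q) *m (a *: P + b *: Q).
Proof.
set U := a *: P + b *: Q.
have UP : U *m P = P *m U.
  by rewrite /U mulmxDl mulmxDr -!scalemxAl -!scalemxAr hPQ.
have UQ : U *m Q = Q *m U.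
  by rewrite /U mulmxDl mulmxDr -!scalemxAl -!scalemxAr hPQ.
clearbody U; by rewrite mulmxDr mulmxDl -!scalemxAl -!scalemxAr UP UQ.
Qed.

Lemma lie_inL X Y : inL P Q X -> inL P Q Y -> exists u, lie X Y = Lb 0 u.
Proof.
move=> [a [b [v ->]]] [c [d [w ->]]]; rewrite lieLb comm_span subrr.
by eexists.
Qed.

Lemma inL_lie X Y : inL P Q X -> inL P Q Y -> inL P Q (lie X Y).
Proof. by move=> hX hY; have [u ->] := lie_inL hX hY; apply: inL_0w. Qed.

Lemma lie_w_lie w Y Z : inL P Q Y -> inL P Q Z -> lie (Lb 0 w) (lie Y Z) = 0.
Proof.
move=> hY hZ; have [u ->] := lie_inL hY hZ.
by rewrite lieLb !mulmx0 !mul0mx !subrr Lb00.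
Qed.
End Fixed.

Lemma scal_cancel a (E : 'M[F]_N) : E != 0 -> a *: E = 0 -> a = 0.
Proof. by move=> hE /eqP; rewrite scalemx_eq0 (negbTE hE) orbF => /eqP. Qed.

Section Centr.
Variables P Q Eb E6 : 'M[F]_N.
Hypotheses (hPb : P *m Eb = Eb) (hQb : Q *m Eb = 0)
           (hP6 : P *m E6 = 0) (hQ6 : Q *m E6 = E6)
           (nEb : Eb != 0) (nE6 : E6 != 0).

Lemma span_Eb a b : (a *: P + b *: Q) *m Eb = a *: Eb.
Proof. by rewrite mulmxDl -!scalemxAl hPb hQb scaler0 addr0. Qed.
Lemma span_E6 a b : (a *: P + b *: Q) *m E6 = b *: E6.
Proof. by rewrite mulmxDl -!scalemxAl hP6 hQ6 scaler0 add0r. Qed.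

Lemma centr X : inL P Q X ->
  (forall Y Z, inL P Q Y -> inL P Q Z -> lie X (lie Y Z) = 0) ->
  exists w, X = Lb 0 w.
Proof.
move=> [a [b [v ->]]] H; set V := a *: P + b *: Q.
have HU (U : 'M[F]_N) : inL P Q (Lb U 0) -> V *m U = 0.
  move=> hU; apply: vec_ext => e.
  have := H _ _ hU (inL_0w P Q e).
  rewrite lie_Lb0 lie_Lb0 -Lb00 => /(congr1 (@ursubmx _ _ _ _ _)).
  by rewrite !Lb_ur mulmxA.
have ha : a = 0.
  apply: (scal_cancel nEb); rewrite -(span_Eb a b) -/V -{1}hPb mulmxA.
  by rewrite (HU _ (inL_P P Q)) mul0mx.
have hb : b = 0.
  apply: (scal_cancel nE6); rewrite -(span_E6 a b) -/V -{1}hQ6 mulmxA.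
  by rewrite (HU _ (inL_Q P Q)) mul0mx.
by exists v; rewrite /V ha hb !scale0r addr0.
Qed.
End Centr.

End Lie.

Section Extract.
Variable F : fieldType.
Variable N : nat.
Variables P Q P' Q' Eb E6 : 'M[F]_N.
Hypothesis hPQ : P *m Q = Q *m P.
Hypotheses (hPb : P' *m Eb = Eb) (hQb : Q' *m Eb = 0)
           (hP6 : P' *m E6 = 0) (hQ6 : Q' *m E6 = E6)
           (nEb : Eb != 0) (nE6 : E6 != 0).

Lemma extract : LieIso P Q P' Q' ->
  exists T a b c d, [/\ T \in unitmx,
     T *m P = (a *: P' + b *: Q') *m T & T *m Q = (c *: P' + d *: Q') *m T].
Proof.
case=> f [hin hlin hbr hinj hsurj].
have f0 : f 0 = 0.
  have := hlin 1 0 0 (inL0 P Q) (inL0 P Q); rewrite !scale1r !addr0 => H.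
  by apply: (@addrI _ (f 0)); rewrite addr0 -H.
have hW w : exists w', f (Lb 0 w) = Lb 0 w'.
  apply: (centr hPb hQb hP6 hQ6 nEb nE6); first exact: hin (inL_0w P Q w).
  move=> Y Z hY hZ; have [Y0 hY0 <-] := hsurj _ hY; have [Z0 hZ0 <-] := hsurj _ hZ.
  rewrite -(hbr Y0 Z0) // -(hbr _ _ (inL_0w P Q w) (inL_lie hPQ hY0 hZ0)).
  by rewrite (lie_w_lie hPQ) // f0.
have [t ht] : exists t : 'cV[F]_N -> 'cV[F]_N, forall w, f (Lb 0 w) = Lb 0 (t w).
  exists (fun w => ursubmx (f (Lb 0 w))) => w.
  by have [w' ->] := hW w; rewrite Lb_ur.
have tlin c u v : t (c *: u + v) = c *: t u + t v.
  have e : Lb 0 (c *: u + v) = c *: Lb 0 u + Lb 0 v by rewrite LbZD scaler0 addr0.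
  have : Lb 0 (t (c *: u + v)) = Lb 0 (c *: t u + t v).
    by rewrite -ht e (hlin c _ _ (inL_0w P Q u) (inL_0w P Q v)) !ht LbZD scaler0 addr0.
  by move/(congr1 (@ursubmx _ _ _ _ _)); rewrite !Lb_ur.
have t0 : t 0 = 0.
  have := tlin 1 0 0; rewrite !scale1r !addr0 => H.
  by apply: (@addrI _ (t 0)); rewrite addr0 -H.
have tinj u v : t u = t v -> u = v.
  move=> e; have : f (Lb 0 u) = f (Lb 0 v) by rewrite !ht e.
  by move/hinj => /(_ (inL_0w P Q u) (inL_0w P Q v)) /(congr1 (@ursubmx _ _ _ _ _)); rewrite !Lb_ur.
have tsum (G : 'I_N -> 'cV[F]_N) : t (\sum_(j < N) G j) = \sum_(j < N) t (G j).
  have tD : {morph t : x y / x + y >-> x + y}.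
    by move=> x y; have := tlin 1 x y; rewrite !scale1r.
  exact: (big_morph t tD t0).
have tZ c u : t (c *: u) = c *: t u by rewrite -[c *: u]addr0 tlin t0 addr0.
pose T : 'M[F]_N := \matrix_(i, j) t (delta_mx j 0) i 0.
have hT w : T *m w = t w.
  have ew : w = \sum_(j < N) w j 0 *: delta_mx j 0.
    apply/matrixP => i l; rewrite summxE (bigD1 i) //= big1 => [|j /negPf hj].
      by rewrite !mxE !eqxx ord1 mulr1 addr0.
    by rewrite !mxE (eq_sym i) hj mulr0.
  rewrite {2}ew tsum; apply/matrixP => i l; rewrite !mxE summxE; apply: eq_bigr => j _.
  by rewrite tZ !mxE ord1 mulrC.
have Tu : T \in unitmx.
  rewrite unitmxE unitfE -det_tr; apply/negP => /det0P [v nv hv].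
  have : t v^T = t 0 by rewrite -hT -[T]trmxK -trmx_mul hv trmx0 t0.
  move/tinj => /(congr1 trmx); rewrite trmxK trmx0 => hv0.
  by rewrite hv0 eqxx in nv.
have [a [b [h hfP]]] := hin _ (inL_P P Q).
have [c [d [h' hfQ]]] := hin _ (inL_Q P Q).
exists T, a, b, c, d; split => //.
  apply: vec_ext2 => e; rewrite -!mulmxA !hT.
  have := hbr _ _ (inL_P P Q) (inL_0w P Q e).
  rewrite lie_Lb0 !ht hfP lie_Lb0 => /(congr1 (@ursubmx _ _ _ _ _)).
  by rewrite !Lb_ur.
apply: vec_ext2 => e; rewrite -!mulmxA !hT.
have := hbr _ _ (inL_Q P Q) (inL_0w P Q e).
rewrite lie_Lb0 !ht hfQ lie_Lb0 => /(congr1 (@ursubmx _ _ _ _ _)).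
by rewrite !Lb_ur.
Qed.

End Extract.

Section Main.
Variable F : fieldType.
Variable n : nat.
Local Notation N := (7 * n.+1)%N.
Local Notation E M A B := (ncmx_eval 7 M A B).

Definition o (i : nat) (h : (i < 7)%N) : 'I_7 := Ordinal h.
Notation o0 := (@o 0 isT). Notation o1 := (@o 1 isT). Notation o2 := (@o 2 isT).
Notation o3 := (@o 3 isT). Notation o4 := (@o 4 isT). Notation o5 := (@o 5 isT).
Notation o6 := (@o 6 isT).

Lemma Eentry (M : nat -> nat -> ncpoly F) (A B : 'M[F]_n.+1) i j r c :
  (E M A B) (bidx i r) (bidx j c) = nceval A B (M i j) r c.
Proof. by have := blkof_ncmx M A B i j; move/matrixP/(_ r c); rewrite mxE. Qed.

Lemma EZ (A B : 'M[F]_n.+1) : E (@MZ F) A B = 0.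
Proof. by apply: blk_inj => i j; rewrite blkof_ncmx blkof0 /MZ /c0 /= sc0. Qed.

Lemma Eb_neq0 (A B : 'M[F]_n.+1) : E (@MP3 F) A B != 0.
Proof.
apply/negP => /eqP /matrixP /(_ (bidx o4 0) (bidx o4 0)).
by rewrite Eentry !mxE /= => /eqP; rewrite oner_eq0.
Qed.
Lemma E6_neq0 (A B : 'M[F]_n.+1) : E (@M66 F) A B != 0.
Proof.
apply/negP => /eqP /matrixP /(_ (bidx o6 0) (bidx o6 0)).
by rewrite Eentry !mxE /= => /eqP; rewrite oner_eq0.
Qed.
Lemma P_neq0 (A B : 'M[F]_n.+1) : E (@M1 F) A B != 0.
Proof.
apply/negP => /eqP /matrixP /(_ (bidx o4 0) (bidx o4 0)).
by rewrite Eentry !mxE /= => /eqP; rewrite oner_eq0.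
Qed.
Lemma Q_neq0 (A B : 'M[F]_n.+1) : E (@M2 F) A B != 0.
Proof.
apply/negP => /eqP /matrixP /(_ (bidx o5 0) (bidx o5 0)).
by rewrite Eentry !mxE /= => /eqP; rewrite oner_eq0.
Qed.
Lemma M65_neq0 (A B : 'M[F]_n.+1) : E (@M65 F) A B != 0.
Proof.
apply/negP => /eqP /matrixP /(_ (bidx o6 0) (bidx o5 0)).
by rewrite Eentry !mxE /= => /eqP; rewrite oner_eq0.
Qed.

Lemma eig2 (X Y En : 'M[F]_N) a b :
  X *m En = a *: En -> Y *m En = b *: En -> X *m Y *m En = (a * b) *: En.
Proof. by move=> hX hY; rewrite -mulmxA hY -scalemxAr hX scalerA mulrC. Qed.

Lemma root01 (x : F) : x * x * x * x = x * x * x -> x = 0 \/ x = 1.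
Proof.
move=> /eqP; rewrite -subr_eq0 -{2}[x * x * x]mulr1 -mulrBr mulf_eq0 => /orP [|].
  by rewrite !mulf_eq0 !orbb => /eqP; left.
by rewrite subr_eq0 => /eqP; right.
Qed.


Lemma scal_eq (En : 'M[F]_N) x y : En != 0 -> x *: En = y *: En -> x = y.
Proof.
move=> nE /eqP; rewrite -subr_eq0 -scalerBl scalemx_eq0 (negbTE nE) orbF subr_eq0.
by move/eqP.
Qed.

Section Hard.
Variables A B A' B' : 'M[F]_n.+1.
Local Notation P := (E (@M1 F) A B).
Local Notation Q := (E (@M2 F) A B).
Local Notation P' := (E (@M1 F) A' B').
Local Notation Q' := (E (@M2 F) A' B').
Local Notation Eb := (E (@MP3 F) A' B').
Local Notation E6 := (E (@M66 F) A' B').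

Lemma hard : LieIso P Q P' Q' -> similar_pair A B A' B'.
Proof.
move=> hL.
have hPQ : P *m Q = Q *m P by rewrite eqPQ eqQP.
have hPb : P' *m Eb = Eb := eqPEb _ _.
have hQb : Q' *m Eb = 0 by rewrite eqQEb EZ.
have hP6 : P' *m E6 = 0 by rewrite eqPE6 EZ.
have hQ6 : Q' *m E6 = E6 := eqQE6 _ _.
have [T [a [b [c [d [Tu TP TQ]]]]]] :=
  extract hPQ hPb hQb hP6 hQ6 (Eb_neq0 _ _) (E6_neq0 _ _) hL.
have tr X Y X2 Y2 : T *m X = X2 *m T -> T *m Y = Y2 *m T ->
    T *m (X *m Y) = (X2 *m Y2) *m T.
  by move=> h1 h2; rewrite mulmxA h1 -mulmxA h2 mulmxA.
have canc X Y : X *m T = Y *m T -> X = Y.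
  by move=> h; rewrite -(mulmxK Tu X) h mulmxK.
have TP2 := tr _ _ _ _ TP TP; have TP3 := tr _ _ _ _ TP2 TP; have TP4 := tr _ _ _ _ TP3 TP.
have TQ2 := tr _ _ _ _ TQ TQ; have TQ3 := tr _ _ _ _ TQ2 TQ; have TQ4 := tr _ _ _ _ TQ3 TQ.
have TP3Q := tr _ _ _ _ TP3 TQ.
have hP4 : P *m P *m P *m P = P *m P *m P by rewrite eqPP eqP3 eqP4.
have hQ4 : Q *m Q *m Q *m Q = Q *m Q *m Q by rewrite eqQQ eqQ3 eqQ4.
have hP3Q : P *m P *m P *m Q = 0 by rewrite eqPP eqP3 eqP3Q EZ.
set P2 := a *: P' + b *: Q'.
set Q2 := c *: P' + d *: Q'.
have P24 : P2 *m P2 *m P2 *m P2 = P2 *m P2 *m P2 by apply: canc; rewrite -TP4 -TP3 hP4.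
have Q24 : Q2 *m Q2 *m Q2 *m Q2 = Q2 *m Q2 *m Q2 by apply: canc; rewrite -TQ4 -TQ3 hQ4.
have PQ2 : P2 *m P2 *m P2 *m Q2 = 0 by apply: canc; rewrite -TP3Q hP3Q mulmx0 mul0mx.
have eP : P2 *m Eb = a *: Eb := span_Eb hPb hQb a b.
have eQ : Q2 *m Eb = c *: Eb := span_Eb hPb hQb c d.
have fP : P2 *m E6 = b *: E6 := span_E6 hP6 hQ6 a b.
have fQ : Q2 *m E6 = d *: E6 := span_E6 hP6 hQ6 c d.
have nEb := Eb_neq0 A' B'; have nE6 := E6_neq0 A' B'.
have ha : a * a * a * a = a * a * a.
  apply: (scal_eq nEb); have := congr1 (mulmx^~ Eb) P24.
  by rewrite /= (eig2 (eig2 (eig2 eP eP) eP) eP) (eig2 (eig2 eP eP) eP).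
have hb : b * b * b * b = b * b * b.
  apply: (scal_eq nE6); have := congr1 (mulmx^~ E6) P24.
  by rewrite /= (eig2 (eig2 (eig2 fP fP) fP) fP) (eig2 (eig2 fP fP) fP).
have hc : c * c * c * c = c * c * c.
  apply: (scal_eq nEb); have := congr1 (mulmx^~ Eb) Q24.
  by rewrite /= (eig2 (eig2 (eig2 eQ eQ) eQ) eQ) (eig2 (eig2 eQ eQ) eQ).
have hd : d * d * d * d = d * d * d.
  apply: (scal_eq nE6); have := congr1 (mulmx^~ E6) Q24.
  by rewrite /= (eig2 (eig2 (eig2 fQ fQ) fQ) fQ) (eig2 (eig2 fQ fQ) fQ).
have hac : a * a * a * c = 0.
  apply: (scal_eq nEb); have := congr1 (mulmx^~ Eb) PQ2.
  by rewrite /= (eig2 (eig2 (eig2 eP eP) eP) eQ) mul0mx scale0r.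
have hbd : b * b * b * d = 0.
  apply: (scal_eq nE6); have := congr1 (mulmx^~ E6) PQ2.
  by rewrite /= (eig2 (eig2 (eig2 fP fP) fP) fQ) mul0mx scale0r.
have nPz X Y : T *m X = Y *m T -> X != 0 -> Y != 0.
  move=> h nX; apply/negP => /eqP Y0; move: h; rewrite Y0 mul0mx => h.
  by move: nX; rewrite -(mulKmx Tu X) h mulmx0 eqxx.
have nab : ~ (a = 0 /\ b = 0).
  move=> [a0 b0]; have := nPz _ _ TP (P_neq0 _ _).
  by rewrite /P2 a0 b0 !scale0r addr0 eqxx.
have ncd : ~ (c = 0 /\ d = 0).
  move=> [c0 d0]; have := nPz _ _ TQ (Q_neq0 _ _).
  by rewrite /Q2 c0 d0 !scale0r addr0 eqxx.
have nsw : ~ (a = 0 /\ b = 1 /\ c = 1 /\ d = 0).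
  move=> [a0 [b1 [c1 d0]]]; move: PQ2.
  rewrite /P2 /Q2 a0 b1 c1 d0 !scale0r !scale1r addr0 add0r.
  rewrite eqQQ eqQ3 eqQ3P => /eqP; apply/negP; exact: M65_neq0.
have one0 : (1 : F) != 0 := oner_neq0 _.
have key : [/\ a = 1, b = 0, c = 0 & d = 1].
  case: (root01 ha) => ea; case: (root01 hb) => eb; case: (root01 hc) => ec;
    case: (root01 hd) => ed; move: hac hbd nab ncd nsw;
    rewrite ?ea ?eb ?ec ?ed ?mul0r ?mul1r ?mulr0 ?mulr1 => hac hbd nab ncd nsw //;
    try (by exfalso; apply: nab; do !split); try (by exfalso; apply: ncd; do !split);
    try (by exfalso; apply: nsw; do !split); try (by move: one0; rewrite hac eqxx);
    try (by move: one0; rewrite hbd eqxx).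
case: key => a1 b0 c0 d1.
move: TP TQ; rewrite /P2 /Q2 a1 b0 c0 d1 !scale1r !scale0r addr0 add0r => {}TP {}TQ.
clear TP2 TP3 TP4 TQ2 TQ3 TQ4 TP3Q.
have TP2 := tr _ _ _ _ TP TP; have TQ2 := tr _ _ _ _ TQ TQ; have TPQ := tr _ _ _ _ TP TQ.
rewrite eqPP eqPP in TP2; rewrite eqQQ eqQQ in TQ2; rewrite eqPQ eqPQ in TPQ.
pose U := invmx T.
have UP : U *m P' = P *m U.
  by rewrite -[P *m U](mulKmx Tu) [T *m (P *m _)]mulmxA TP mulmxK.
have UQ : U *m Q' = Q *m U.
  by rewrite -[Q *m U](mulKmx Tu) [T *m (Q *m _)]mulmxA TQ mulmxK.
have UT : U *m T = 1%:M by rewrite mulVmx.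
pose tb i j := blkof T (inord i) (inord j).
pose ub i j := blkof U (inord i) (inord j).
have tbE (i j : 'I_7) : blkof T i j = tb i j by rewrite /tb !inord_val.
have ubE (i j : 'I_7) : blkof U i j = ub i j by rewrite /ub !inord_val.
have e1 := congr1 (fun Z => blkof Z o3 o0) TP2.
have e2 := congr1 (fun Z => blkof Z o3 o0) TPQ.
have e3 := congr1 (fun Z => blkof Z o3 o0) TQ2.
have u1 := congr1 (fun Z => blkof Z o0 o0) UP.
have u3 := congr1 (fun Z => blkof Z o0 o1) UP.
have u4 := congr1 (fun Z => blkof Z o0 o4) UP.
have u2 := congr1 (fun Z => blkof Z o0 o0) UQ.
have u5 := congr1 (fun Z => blkof Z o0 o5) UQ.
have u6 := congr1 (fun Z => blkof Z o0 o6) UQ.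
have u0 := congr1 (fun Z => blkof Z o0 o0) UT.
move: e1 e2 e3 u1 u2 u3 u4 u5 u6 u0 => /=.
rewrite !blkofM !big_ord_recr !big_ord0 /= !blkof_ncmx !tbE !ubE blkof1 /=.
rewrite ?sc0 ?mul0mx ?mulmx0 ?mul1mx ?mulmx1 ?add0r ?addr0.
move=> e1 e2 e3 -> -> -> -> -> ->; rewrite !mul0mx !addr0 => /mulmx1_unit [_ tu].
rewrite e1 in e2 e3.
exists (invmx (tb 0%N 0%N)); first by rewrite unitmx_inv.
by rewrite invmxK e2 e3 !mulmxK.
Qed.
End Hard.

End Main.

Section Easy.
Variable F : fieldType.
Variable n : nat.
Local Notation N := (7 * n.+1)%N.
Local Notation E M A B := (ncmx_eval 7 M A B).

Definition D (S : 'M[F]_n.+1) : 'M[F]_N := blk (fun i j : 'I_7 => if i == j then S else 0).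

Lemma blkDl S (X : 'M[F]_N) i j : blkof (D S *m X) i j = S *m blkof X i j.
Proof.
rewrite blkofM (bigD1 i) //= blkofK eqxx big1 ?addr0 // => l hl.
by rewrite blkofK eq_sym (negbTE hl) mul0mx.
Qed.

Lemma blkDr S (X : 'M[F]_N) i j : blkof (X *m D S) i j = blkof X i j *m S.
Proof.
rewrite blkofM (bigD1 j) //= blkofK eqxx big1 ?addr0 // => l hl.
by rewrite blkofK (negbTE hl) mulmx0.
Qed.

Lemma D1 : D 1%:M = 1%:M.
Proof. by apply: blk_inj => i j; rewrite blkofK blkof1. Qed.

Lemma DM S S' : D S *m D S' = D (S *m S').
Proof.
apply: blk_inj => i j; rewrite blkDl !blkofK.
by case: (i == j); rewrite ?mulmx0.
Qed.

Variable S : 'M[F]_n.+1.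
Hypothesis Su : S \in unitmx.

Lemma nceval_conj (A B : 'M[F]_n.+1) p :
  nceval (invmx S *m A *m S) (invmx S *m B *m S) p = invmx S *m nceval A B p *m S.
Proof.
elim: p => [c| | |p IHp q IHq|p IHp q IHq] //=.
- by rewrite mul_mx_scalar -scalemxAl mulVmx // scalemx1.
- by rewrite IHp IHq mulmxDr mulmxDl.
- by rewrite IHp IHq -!mulmxA mulKVmx.
Qed.

Lemma conjE (M : nat -> nat -> ncpoly F) (A B : 'M[F]_n.+1) :
  D (invmx S) *m E M A B *m D S = E M (invmx S *m A *m S) (invmx S *m B *m S).
Proof.
apply: blk_inj => i j; rewrite blkDr blkDl !blkof_ncmx.
by rewrite nceval_conj.
Qed.

Definition R : 'M[F]_(N + 1) := block_mx (D S) 0 0 1%:M.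
Definition Ri : 'M[F]_(N + 1) := block_mx (D (invmx S)) 0 0 1%:M.

Lemma RRi : R *m Ri = 1%:M.
Proof.
rewrite /R /Ri mulmx_block !mulmx0 !mul0mx !addr0 !add0r mulmx1 DM mulmxV // D1.
by rewrite -scalar_mx_block.
Qed.
Lemma RiR : Ri *m R = 1%:M.
Proof.
rewrite /R /Ri mulmx_block !mulmx0 !mul0mx !addr0 !add0r mulmx1 DM mulVmx // D1.
by rewrite -scalar_mx_block.
Qed.

Lemma conjLb V v : Ri *m Lb V v *m R = Lb (D (invmx S) *m V *m D S) (D (invmx S) *m v).
Proof.
rewrite /R /Ri /Lb !mulmx_block !mulmx0 !mul0mx !addr0 !add0r !mulmx1.
by congr block_mx; apply/matrixP => i j; rewrite !mxE big1 // => k _; rewrite mxE mul0r.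

Qed.

Lemma easy (A B : 'M[F]_n.+1) :
  LieIso (E (@M1 F) A B) (E (@M2 F) A B)
         (E (@M1 F) (invmx S *m A *m S) (invmx S *m B *m S))
         (E (@M2 F) (invmx S *m A *m S) (invmx S *m B *m S)).
Proof.
set P := E (@M1 F) A B; set Q := E (@M2 F) A B.
have hspan a b : D (invmx S) *m (a *: P + b *: Q) *m D S =
    a *: E (@M1 F) (invmx S *m A *m S) (invmx S *m B *m S)
  + b *: E (@M2 F) (invmx S *m A *m S) (invmx S *m B *m S).
  by rewrite mulmxDr mulmxDl -!scalemxAr -!scalemxAl !conjE.
pose f X := Ri *m X *m R.
have fM X Y : f (X *m Y) = f X *m f Y.
  by rewrite /f !mulmxA -[Ri *m X *m R *m Ri]mulmxA RRi mulmx1.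
exists f; split.
- move=> X [a [b [v ->]]]; rewrite /f conjLb hspan; exact: inL_Lb.
- by move=> c X Y _ _; rewrite /f mulmxDr mulmxDl -scalemxAr -scalemxAl.
- by move=> X Y _ _; rewrite /lie /f mulmxBr mulmxBl -!/(f _) !fM.
- move=> X Y _ _ e.
  have fK W : R *m f W *m Ri = W.
    by rewrite /f !mulmxA RRi mul1mx -mulmxA RRi mulmx1.
  by rewrite -(fK X) e fK.
- move=> Z [a [b [v ->]]]; exists (Lb (a *: P + b *: Q) (D S *m v)); first exact: inL_Lb.
  by rewrite /f conjLb hspan mulmxA DM mulVmx // D1 mul1mx.
Qed.

End Easy.

Theorem theorem2 (F : fieldType) (hF : exists x : F, x != 0 /\ x != 1) :
  comm2_Lie_wild F.
Proof.
exists 7%N, (@M1 F), (@M2 F); split.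
  move=> n A B; split; first by rewrite eqPQ eqQP.
  have hPb := eqPEb A B; have hQb : ncmx_eval 7 (@M2 F) A B *m ncmx_eval 7 (@MP3 F) A B = 0 by rewrite eqQEb EZ.
  have hP6 : ncmx_eval 7 (@M1 F) A B *m ncmx_eval 7 (@M66 F) A B = 0 by rewrite eqPE6 EZ.
  have hQ6 := eqQE6 A B.
  move=> a b e; split.
    apply: (scal_cancel (Eb_neq0 A B)); by rewrite -(span_Eb hPb hQb a b) e mul0mx.
  apply: (scal_cancel (E6_neq0 A B)); by rewrite -(span_E6 hP6 hQ6 a b) e mul0mx.
move=> n A B A' B'; split; first exact: hard.
move=> [S Su [<- <-]]; exact: easy.
Qed.
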